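(* Let $I$ be a compact, connected and locally connected topological space and $h:I\to\mathbb{R}$ a positive continuous function attaining its lower bound at $v\in I$. Let $(\tilde I,\tilde d)$ be the quotient metric space of $I$ under the pseudo-metric $d(y,z)=h(y)+h(z)-2\lambda(y,z)$, where $\lambda(y,z)=\sup\{\lambda : C_{y,\lambda}=C_{z,\lambda},\ \lambda\le h(y),\ \lambda\le h(z)\}$. Then $(\tilde I,\tilde d)$ is a compact metric space.
   Context: For $x\in I$ and $\lambda\le h(x)$, $C_{x,\lambda}$ denotes the maximal connected subset of $\{y\in I: h(y)\ge\lambda\}$ containing $x$. The quotient $\tilde I$ is obtained by identifying $x$ and $y$ whenever $d(x,y)=0$; $\tilde d$ is the metric on $\tilde I$ induced by $d$. *)

(* Defs.v *)
From HB Require Import structures.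
From mathcomp Require Import all_boot all_order all_algebra.
From mathcomp Require Import all_classical all_reals all_analysis.
Set Implicit Arguments. Unset Strict Implicit. Unset Printing Implicit Defensive.
Import Order.TTheory GRing.Theory Num.Theory numFieldTopology.Exports.
Local Open Scope classical_set_scope.
Local Open Scope ring_scope.

Definition locally_connected (T : topologicalType) : Prop :=
  forall (x : T) (U : set T), nbhs x U ->
    exists V : set T, [/\ open V, connected V, V x & V `<=` U].

Section Tree.
Context {T : topologicalType} {R : realType}.

Definition Ccomp (h : T -> R) (x : T) (l : R) : set T :=
  connected_component [set y | l <= h y] x.

Definition lam (h : T -> R) (y z : T) : R :=
  sup [set l : R | [/\ Ccomp h y l = Ccomp h z l, l <= h y & l <= h z]].

Definition pd (h : T -> R) (y z : T) : R := h y + h z - 2 * lam h y z.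

Definition quot (h : T -> R) : Type :=
  {A : set T | exists x : T, A = [set y | pd h x y = 0]}.

Definition qrep (h : T -> R) (A : quot h) : T := projT1 (cid (proj2_sig A)).

Definition qdist (h : T -> R) (A B : quot h) : R := pd h (qrep A) (qrep B).
End Tree.

Definition is_metric {R : realType} (Q : Type) (dist : Q -> Q -> R) : Prop :=
  forall a b c : Q,
    [/\ 0 <= dist a b, dist a b = 0 <-> a = b, dist a b = dist b a
      & dist a c <= dist a b + dist b c].

Definition dopen {R : realType} (Q : Type) (dist : Q -> Q -> R) (U : set Q) :=
  forall q, U q -> exists e : R, 0 < e /\ forall q', dist q q' < e -> U q'.

Definition metric_compact {R : realType} (Q : Type) (dist : Q -> Q -> R) : Prop :=
  forall (J : Type) (U : J -> set Q),
    (forall j, dopen dist (U j)) -> (forall q, exists j, U j q) ->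
    exists F : set J, finite_set F /\ forall q, exists2 j, F j & U j q.

(* Main.v *)
Require Import Defs.
From HB Require Import structures.
From mathcomp Require Import all_boot all_order all_algebra.
From mathcomp Require Import all_classical all_reals all_analysis.
From mathcomp Require Import finmap.
Import Order.TTheory GRing.Theory Num.Theory numFieldTopology.Exports.
Local Open Scope classical_set_scope.
Local Open Scope ring_scope.
From mathcomp Require Import lra.

Definition pI (T : topologicalType) (x0 : T) : Type := T.
HB.instance Definition _ (T : topologicalType) (x0 : T) :=
  Topological.copy (@pI T x0) T.
HB.instance Definition _ (T : topologicalType) (x0 : T) :=
  isPointed.Build (@pI T x0) x0.

Lemma compact_cover_np (T : topologicalType) (x0 : T) :
  compact [set: T] -> @cover_compact T [set: T].
Proof.
move=> C.
have C' : compact [set: @pI T x0] by exact: C.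
move: C'; rewrite (@compact_cover (@pI T x0)) => C'.
exact: C'.
Qed.

Section S.
Context {R : realType} {I : topologicalType} (h : I -> R) (v : I).
Hypothesis Icon : connected [set: I].
Hypothesis hmin : forall x, h v <= h x.

Definition SS y z := [set l : R | [/\ Ccomp h y l = Ccomp h z l, l <= h y & l <= h z]].

Lemma SSE y z l : SS y z l <-> (l <= h y /\ Ccomp h y l z).
Proof.
split.
  case=> e ly lz; split => //; rewrite e; exact: connected_component_refl.
case=> ly yz; have lz : l <= h z by have := connected_component_sub yz.
split => //; apply/seteqP; split => w.
  by move=> yw; apply: connected_component_trans yw; apply: connected_component_sym.
by move=> zw; apply: connected_component_trans zw.
Qed.

Lemma SS_down y z l l' : SS y z l -> l' <= l -> SS y z l'.
Proof.
move=> /SSE [ly yz] ll'; apply/SSE; split; first exact: le_trans ly.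
move: yz => [B [By BA Bc Bz]]; exists B => //; split => // w /BA /=.
exact: le_trans.
Qed.

Lemma SS_sym y z : SS y z = SS z y.
Proof. by apply/seteqP; split => l [e a b]; split. Qed.

Lemma SS_v y z : SS y z (h v).
Proof.
apply/SSE; split => //; rewrite /Ccomp.
have -> : [set y | h v <= h y] = setT by apply/seteqP; split => // w _; exact: hmin.
by rewrite connected_component_id.
Qed.

Lemma has_sup_SS y z : has_sup (SS y z).
Proof. split; first by exists (h v); exact: SS_v. by exists (h y) => l [_ ? _]. Qed.

Lemma lam_ge y z l : SS y z l -> l <= lam h y z.
Proof. by move=> H; apply: ub_le_sup => //; case: (has_sup_SS y z). Qed.

Lemma lam_le y z : lam h y z <= h y /\ lam h y z <= h z.
Proof.
split; apply: ge_sup; (try by exists (h v); exact: SS_v); by move=> l [].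
Qed.

Lemma lt_lam y z l : l < lam h y z -> SS y z l.
Proof.
move=> ll.
have e0 : 0 < lam h y z - l by rewrite subr_gt0.
have [l' Sl' ll'] := sup_adherent e0 (has_sup_SS y z).
apply: SS_down Sl' _; move: ll'; rewrite /lam opprB addrCA subrr addr0 => /ltW //.
Qed.

Lemma lamE y z : lam h y z = sup (SS y z). Proof. by []. Qed.

Lemma lam_sym y z : lam h y z = lam h z y.
Proof. by rewrite !lamE SS_sym. Qed.

Lemma lam_self x : lam h x x = h x.
Proof.
apply/eqP; rewrite eq_le; apply/andP; split; first by case: (lam_le x x).
by apply: lam_ge; split.
Qed.

Lemma SS_trans y z w l : SS y z l -> SS z w l -> SS y w l.
Proof. by case=> e1 a1 b1 [e2 a2 b2]; split => //; rewrite e1. Qed.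

Lemma lam_ge_of (a c : R) : (forall l, l < a -> l <= c) -> a <= c.
Proof.
move=> H; case: (leP a c) => // ca.
have := H ((c + a) / 2) (midf_lt ca).2.
by rewrite leNgt (midf_lt ca).1.
Qed.

Lemma lam_tri y z w : lam h y z <= lam h z w -> lam h y z <= lam h y w.
Proof.
move=> le; apply: lam_ge_of => l ll; apply: lam_ge; apply: (@SS_trans _ z).
  exact: lt_lam.
by apply: lt_lam; apply: lt_le_trans le.
Qed.

Lemma pd_ge0 y z : 0 <= pd h y z.
Proof.
rewrite /pd; have [a b] := lam_le y z.
have : 2 * lam h y z <= h y + h z by rewrite mulr2n mulrDl mul1r lerD.
by rewrite subr_ge0.
Qed.

Lemma pd_sym y z : pd h y z = pd h z y.
Proof. by rewrite /pd lam_sym [h y + _]addrC. Qed.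

Lemma pd_self x : pd h x x = 0.
Proof. by rewrite /pd lam_self mulr_natl mulr2n subrr. Qed.

Lemma pd_tri y z w : pd h y w <= pd h y z + pd h z w.
Proof.
rewrite /pd.
have [a1 b1] := lam_le y z; have [a2 b2] := lam_le z w.
suff : lam h y z + lam h z w <= h z + lam h y w by lra.
case: (leP (lam h y z) (lam h z w)) => H.
  by have := lam_tri _ _ _ H; lra.
have H' : lam h w z <= lam h z y by rewrite lam_sym (lam_sym z y); exact: ltW.
by have := lam_tri _ _ _ H'; rewrite (lam_sym w y) (lam_sym w z); lra.
Qed.

Hypothesis Iloc : locally_connected I.
Hypothesis hcont : continuous h.

Lemma pd_near x e : 0 < e -> nbhs x [set y | pd h x y < e].
Proof.
move=> e0.
have e4 : 0 < e/4 by rewrite divr_gt0.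
have B : nbhs x [set y | `|h x - h y| < e/4].
  have H := @cvgr_dist_lt _ _ _ _ _ h (h x) (hcont x) _ e4.
  apply: H.
have [V [oV cV Vx VB]] := Iloc _ _ B.
have nV : nbhs x V by apply: open_nbhs_nbhs; split.
apply: filterS nV => y Vy.
have hb w : V w -> h x - e/4 < h w < h x + e/4.
  by move=> /VB /=; rewrite ltr_norml => /andP [a b]; apply/andP; split; lra.
have Vl : V `<=` [set w | h x - e/4 <= h w].
  by move=> w /hb /andP [a _] /=; lra.
have S : SS x y (h x - e/4).
  apply/SSE; split; first by lra.
  exact: connected_component_max Vx Vl cV y Vy.
have := lam_ge _ _ _ S; have /andP [a b] := hb y Vy; rewrite /pd /= => L; lra.
Qed.

Definition cls (x : I) : quot h :=
  exist (fun A => exists x0, A = [set y | pd h x0 y = 0])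
    [set y | pd h x y = 0] (ex_intro _ x erefl).

Lemma pd_eq0 x y z : pd h x y = 0 -> pd h x z = pd h y z.
Proof.
move=> E.
have := pd_tri x y z; have := pd_tri y x z; rewrite (pd_sym y x) E => a b.
apply/eqP; rewrite eq_le; apply/andP; split; lra.
Qed.

Lemma quot_eq (A B : quot h) : proj1_sig A = proj1_sig B -> A = B.
Proof.
case: A => A pA; case: B => B pB /= e; subst.
by congr exist; exact: Prop_irrelevance.
Qed.

Lemma qrepP (A : quot h) : proj1_sig A = [set y | pd h (qrep A) y = 0].
Proof. by rewrite /qrep; case: cid. Qed.

Lemma qrep_cls x : pd h x (qrep (cls x)) = 0.
Proof.
have E := qrepP (cls x).
have : [set y | pd h (qrep (cls x)) y = 0] (qrep (cls x)) by exact: pd_self.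
by rewrite -E.
Qed.

Lemma cls_rep (A : quot h) : cls (qrep A) = A.
Proof. by apply: quot_eq; rewrite (qrepP A). Qed.

Lemma qdist_cls x y : qdist (cls x) (cls y) = pd h x y.
Proof.
rewrite /qdist -(pd_eq0 _ _ _ (qrep_cls x)) pd_sym -(pd_eq0 _ _ _ (qrep_cls y)).
exact: pd_sym.
Qed.

Lemma cls_eq x y : pd h x y = 0 -> cls x = cls y.
Proof.
move=> E; apply: quot_eq => /=; apply/seteqP; split => z /=;
by rewrite (pd_eq0 _ _ _ E).
Qed.

Lemma cls_surj (A : quot h) : exists x, A = cls x.
Proof. by exists (qrep A); rewrite cls_rep. Qed.

Lemma main_sec : compact [set: I] ->
  is_metric (@qdist I R h) /\ metric_compact (@qdist I R h).
Proof.
move=> Icomp; split.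
  move=> a b c.
  have [x ->] := cls_surj a; have [y ->] := cls_surj b; have [z ->] := cls_surj c.
  rewrite !qdist_cls; split.
  - exact: pd_ge0.
  - split; first exact: cls_eq.
    by move=> E; rewrite -qdist_cls E qdist_cls pd_self.
  - exact: pd_sym.
  - exact: pd_tri.
move=> J U Uo Ucov.
have [[x0 _]|I0] := pselect (exists x : I, True); last first.
  exists set0; split; first exact: finite_set0.
  by move=> q; exfalso; apply: I0; exists (qrep q).
have Icc : cover_compact [set: I] by exact: (@compact_cover_np I x0 Icomp).
have := Icc {classic J} setT (fun j => [set x | U j (cls x)]).
case.
- move=> j _; rewrite openE => x /= Ux.
  have [e [e0 He]] := Uo j _ Ux.
  apply: filterS (pd_near x e e0) => y /= pxy; apply: He; rewrite qdist_cls.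
  exact: pxy.
- move=> x _; have [j Uj] := Ucov (cls x); by exists j.
move=> D' _ cov; exists [set` D']; split; first exact: (@finite_fset {classic J} D').
move=> q; have [x ->] := cls_surj q.
by have [j Dj Uj] := cov x Logic.I; exists j.
Qed.
End S.

Theorem mainTheorem10 (R : realType) (I : topologicalType) (h : I -> R) (v : I) :
  compact [set: I] -> connected [set: I] -> locally_connected I ->
  continuous h -> (forall x, 0 < h x) -> (forall x, h v <= h x) ->
  is_metric (@qdist I R h) /\ metric_compact (@qdist I R h).
Proof.
move=> Ic Icon Iloc hc _ hmin.
exact: (@main_sec R I h v Icon hmin Iloc hc Ic).
Qed.
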